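(* For any graph function $\alpha$ on a strongly connected digraph $G$, $\max_v y_v=0$.
   Context: $G$ is a strongly connected directed graph (self-loops allowed); a graph function assigns a real weight $\alpha_{uv}$ to each edge. $\alpha_v^{\text{in}}=\max_{u:(u,v)\in G}\alpha_{uv}$, $\alpha_v^{\text{out}}=\max_{w:(v,w)\in G}\alpha_{vw}$, $\rho^R_v=\max\{0,\alpha_v^{\text{out}}-\alpha_v^{\text{in}}\}$. A raising operation at $v$: if $\rho^R_v>0$ add $\rho^R_v/2$ to each incoming edge weight $\alpha_{uv}$ ($u\ne v$) and subtract it from each outgoing $\alpha_{vw}$ ($w\neq v$); otherwise do nothing. Starting from $\alpha$, for any infinite sequence of raising operations in which every vertex occurs infinitely often, the cumulative amount $r_v(t)$ by which each vertex has been raised converges to a limit vector $r^*$ independent of the sequence. The heights are $y_v=-r^*_v$. *)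

(* Defs.v *)
From HB Require Import structures.
From mathcomp Require Import all_boot all_order all_algebra.
From mathcomp Require Import all_classical all_reals all_analysis.
Set Implicit Arguments. Unset Strict Implicit. Unset Printing Implicit Defensive.
Import Order.TTheory GRing.Theory Num.Theory.
Local Open Scope ring_scope.

Section Raising.
Variables (R : realType) (V : finType) (E : rel V).

(* Strong connectivity: for all u v there is a directed path of length >= 1
   from u to v (so every vertex has in- and out-edges; self-loops allowed). *)
Definition strongly_connected : Prop :=
  forall u v : V, exists w : V, E u w && connect E w v.

(* maximum of a finite list, with junk value 0 on the empty list *)
Definition seqmax (s : seq R) : R := \big[Num.max/head 0 s]_(x <- s) x.

Definition alpha_in (a : V -> V -> R) (v : V) : R :=
  seqmax [seq a u v | u <- enum V & E u v].
Definition alpha_out (a : V -> V -> R) (v : V) : R :=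
  seqmax [seq a v w | w <- enum V & E v w].

Definition rhoR (a : V -> V -> R) (v : V) : R :=
  Num.max 0 (alpha_out a v - alpha_in a v).

(* the raising operation at v (weights are only meaningful on edges) *)
Definition raise (a : V -> V -> R) (v : V) : V -> V -> R :=
  fun x y =>
    a x y + (if (y == v) && (x != v) then rhoR a v / 2 else 0)
          - (if (x == v) && (y != v) then rhoR a v / 2 else 0).

Fixpoint weights_after (a : V -> V -> R) (s : nat -> V) (t : nat) : V -> V -> R :=
  match t with
  | 0 => a
  | t'.+1 => raise (weights_after a s t') (s t')
  end.

Definition raised (a : V -> V -> R) (s : nat -> V) (t : nat) (v : V) : R :=
  \sum_(i < t | s i == v) rhoR (weights_after a s i) v / 2.

Definition fair (s : nat -> V) : Prop :=
  forall (v : V) (N : nat), exists t, (N <= t)%N /\ s t = v.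

End Raising.

(* Main.v *)
Require Import Defs.
From HB Require Import structures.
From mathcomp Require Import all_boot all_order all_algebra.
From mathcomp Require Import all_classical all_reals all_analysis.
From mathcomp Require Import lra.
Import Order.TTheory GRing.Theory Num.Theory.
Import numFieldNormedType.Exports.
Local Open Scope classical_set_scope.
Local Open Scope ring_scope.

Lemma bigmax_ge (R : realType) (s : seq R) idx x :
  x \in s -> x <= \big[Num.max/idx]_(y <- s) y.
Proof.
elim: s => //= y s IH; rewrite inE big_cons => /orP[/eqP->|xs].
  by rewrite le_max lexx.
by rewrite le_max IH ?orbT.
Qed.

Lemma bigmax_le (R : realType) (s : seq R) idx K :
  idx <= K -> (forall y, y \in s -> y <= K) -> \big[Num.max/idx]_(y <- s) y <= K.
Proof.
elim: s => [|y s IH] H1 H2; rewrite ?big_nil ?big_cons //.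
rewrite ge_max H2 ?mem_head //=; apply: IH => // z zs; by apply: H2; rewrite inE zs orbT.
Qed.

Lemma seqmax_mono (R : realType) (V : eqType) (l : seq V) (f g : V -> R) c :
  0 <= c -> (forall u, f u <= g u + c) ->
  seqmax [seq f u | u <- l] <= seqmax [seq g u | u <- l] + c.
Proof.
case: l => [|u0 l] c0 H; first by rewrite /seqmax /= !big_nil /= add0r.
rewrite /seqmax /=.
have Hg : forall u, u \in u0 :: l ->
   g u <= \big[Num.max/g u0]_(y <- (g u0 :: [seq g u | u <- l])) y.
  by move=> u ul; apply: bigmax_ge; exact: (map_f g ul).
apply: bigmax_le.
  by apply: le_trans (H u0) _; rewrite lerD2r Hg ?mem_head.
move=> y /(mapP (s := u0 :: l)) [u ul ->].
by apply: le_trans (H u) _; rewrite lerD2r Hg.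
Qed.

Lemma rhoR_ge0 (R : realType) (V : finType) (E : rel V) (a : V -> V -> R) v :
  0 <= rhoR E a v.
Proof. by rewrite /rhoR le_max lexx. Qed.

Lemma raisedS (R : realType) (V : finType) (E : rel V) (a : V -> V -> R) s t v :
  raised E a s t.+1 v = raised E a s t v +
    (if s t == v then rhoR E (weights_after E a s t) v / 2 else 0).
Proof.
by rewrite /raised big_mkcond big_ord_recr /= -big_mkcond.
Qed.

Lemma raised0 (R : realType) (V : finType) (E : rel V) (a : V -> V -> R) s v :
  raised E a s 0 v = 0.
Proof. by rewrite /raised big_ord0. Qed.

Lemma raised_ge0 (R : realType) (V : finType) (E : rel V) (a : V -> V -> R) s t v :
  0 <= raised E a s t v.
Proof.
apply: sumr_ge0 => i _; apply: divr_ge0 => //; exact: rhoR_ge0.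
Qed.

Lemma weightsE (R : realType) (V : finType) (E : rel V) (a : V -> V -> R) s t x y :
  weights_after E a s t x y = a x y + raised E a s t y - raised E a s t x.
Proof.
elim: t x y => [|t IH] x y; first by rewrite /= !raised0; lra.
rewrite /= /raise IH !raisedS.
set rho := rhoR E (weights_after E a s t) (s t).
case: (eqVneq x (s t)) => [->|hx]; case: (eqVneq y (s t)) => [->|hy] /=;
  rewrite ?eqxx ?(negbTE hx) ?(negbTE hy) ?(eq_sym (s t)) ?(negbTE hx) ?(negbTE hy) /=;
  rewrite -/rho; lra.
Qed.

Lemma invariant (R : realType) (V : finType) (E : rel V) (a : V -> V -> R) s
  (rh : V -> R) :
  (forall x, 0 <= rh x) ->
  (forall v, alpha_out E (fun x y => a x y + rh y - rh x) v <=
             alpha_in E (fun x y => a x y + rh y - rh x) v) ->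
  forall t x, raised E a s t x <= rh x.
Proof.
move=> rh0 bal; elim=> [|t IH] x; first by rewrite raised0.
rewrite raisedS; case: eqP => [<-|_]; last by rewrite addr0.
set v := s t.
set W := weights_after E a s t.
set b := (fun x y => a x y + rh y - rh x).
set d := rh v - raised E a s t v.
have d0 : 0 <= d by rewrite /d subr_ge0.
have Ho : alpha_out E W v <= alpha_out E b v + d.
  apply: seqmax_mono => // u; rewrite /W /b weightsE /d.
  have := IH u; lra.
have Hi : alpha_in E b v <= alpha_in E W v + d.
  apply: seqmax_mono => // u; rewrite /W /b weightsE /d.
  have := IH u; lra.
have Hb := bal v.
have : rhoR E W v <= 2 * d.
  rewrite /rhoR ge_max; apply/andP; split; first lra.
  rewrite -/b in Hb; lra.
rewrite /d; lra.
Qed.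

Lemma unif_conv (R : realType) (V : finType) (f : nat -> V -> R) (l : V -> R) :
  (forall v, (fun t => f t v) @ \oo --> l v) ->
  forall eps : R, 0 < eps -> exists N, forall t, (N <= t)%N -> forall v, `|l v - f t v| < eps.
Proof.
move=> H eps e0.
have : \forall t \near \oo, forall v, `|l v - f t v| < eps.
  apply: filter_forall => v.
  by move/cvgrPdist_lt: (H v) => /(_ eps e0).
case=> N _ HN; exists N => t Nt; exact: HN.
Qed.

Lemma lim_le (R : realType) (f : nat -> R) l K :
  f @ \oo --> l -> (forall t, f t <= K) -> l <= K.
Proof.
move=> H HK; apply/ler_addgt0Pr => e e0.
move/cvgrPdist_lt: H => /(_ e e0) [N _ HN].
have := HN N (leqnn N); rewrite ltr_norml => /andP[h1 h2].
have := HK N; lra.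
Qed.

Lemma lim_ge (R : realType) (f : nat -> R) l K :
  f @ \oo --> l -> (forall t, K <= f t) -> K <= l.
Proof.
move=> H HK; apply/ler_addgt0Pr => e e0.
move/cvgrPdist_lt: H => /(_ e e0) [N _ HN].
have := HN N (leqnn N); rewrite ltr_norml => /andP[h1 h2].
have := HK N; lra.
Qed.

Lemma balanced_limit (R : realType) (V : finType) (E : rel V) (a : V -> V -> R)
  s (rs : V -> R) :
  fair s ->
  (forall v : V, (fun t => raised E a s t v) @ \oo --> rs v) ->
  forall v, alpha_out E (fun x y => a x y + rs y - rs x) v <=
            alpha_in E (fun x y => a x y + rs y - rs x) v.
Proof.
move=> hf hc v; apply/ler_addgt0Pr => e e0.
have e8 : 0 < e / 8 by apply: divr_gt0.
have [N HN] := @unif_conv R V (fun t v => raised E a s t v) rs hc _ e8.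
have [t [Nt st]] := hf v N.
have H1 := HN t Nt.
have H2 := HN t.+1 (leqW Nt).
set b := (fun x y => a x y + rs y - rs x).
set W := weights_after E a s t.
have B : forall x, - (e / 8) < rs x - raised E a s t x < e / 8.
  by move=> x; rewrite -ltr_norml.
have B2 : forall x, - (e / 8) < rs x - raised E a s t.+1 x < e / 8.
  by move=> x; rewrite -ltr_norml.
have Ho : alpha_out E b v <= alpha_out E W v + 2 * (e / 8).
  apply: seqmax_mono; first lra.
  move=> u; rewrite /W /b weightsE.
  have /andP[h1 h2] := B u; have /andP[h3 h4] := B v; lra.
have Hi : alpha_in E W v <= alpha_in E b v + 2 * (e / 8).
  apply: seqmax_mono; first lra.
  move=> u; rewrite /W /b weightsE.
  have /andP[h1 h2] := B u; have /andP[h3 h4] := B v; lra.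
have Hr : alpha_out E W v - alpha_in E W v <= rhoR E W v.
  by rewrite /rhoR le_max lexx orbT.
have Hs := raisedS R V E a s t v.
rewrite st eqxx -/W in Hs.
have /andP[h1 h2] := B v; have /andP[h3 h4] := B2 v.
lra.
Qed.

Theorem corollary1 (R : realType) (V : finType) (E : rel V) (v0 : V)
    (alpha : V -> V -> R) (s : nat -> V) (rstar : V -> R) :
  strongly_connected E ->
  fair s ->
  (forall v : V, (fun t => raised E alpha s t v) @ \oo --> rstar v) ->
  (exists v : V, - rstar v = 0) /\ (forall v : V, - rstar v <= 0).
Proof.
move=> _ hf hc.
have pos : forall v, 0 <= rstar v.
  move=> v; apply: (@lim_ge R (fun t => raised E alpha s t v) _ _ (hc v)) => t; exact: raised_ge0.
split; last by move=> v; rewrite oppr_le0.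
have [vm _ Hm] := @arg_minP _ R V v0 xpredT rstar erefl.
exists vm.
have bal := @balanced_limit R V E alpha s rstar hf hc.
have inv := @invariant R V E alpha s (fun x => rstar x - rstar vm).
have H : forall t x, raised E alpha s t x <= rstar x - rstar vm.
  apply: inv.
    by move=> x; rewrite subr_ge0; apply: Hm.
  move=> v.
  have -> : (fun x y => alpha x y + (rstar y - rstar vm) - (rstar x - rstar vm))
          = (fun x y => alpha x y + rstar y - rstar x).
    by apply/funext => x; apply/funext => y; lra.
  exact: bal.
have := @lim_le R (fun t => raised E alpha s t vm) _ _ (hc vm) (fun t => H t vm).
have := pos vm; lra.
Qed.
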